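(* Let $\mathfrak A=\langle A,f,g\rangle$ be a betweenness algebra with at least four elements. Then $\{0,1\}$ is the universe of a subalgebra of $\mathfrak A$ that is isomorphic to the two-element algebra $\mathfrak A_1=\langle\{0,1\},f_1,g_1\rangle$ with $f_1(0,0)=f_1(0,1)=f_1(1,0)=0$, $f_1(1,1)=1$ and $g_1(0,0)=g_1(0,1)=g_1(1,0)=1$, $g_1(1,1)=0$.
   Context: A PS-algebra is $\langle A,f,g\rangle$ where $A$ is a Boolean algebra with at least two elements (operations $+,\cdot,-,0,1$) and $f,g\colon A^2\to A$ satisfy: $f(x,y)=0$ whenever $x=0$ or $y=0$; $f$ is additive in each argument; $g(x,y)=1$ whenever $x=0$ or $y=0$; $g$ is co-additive in each argument ($g(x+x',y)=g(x,y)\cdot g(x',y)$, $g(x,y+y')=g(x,y)\cdot g(x,y')$). A betweenness algebra is a PS-algebra satisfying for all $x,y,z$: (ABT0) $x\leq f(x,x)$; (ABT1$_f$) $f(x,y)\leq f(y,x)$; (ABT1$_g$) $g(x,y)\leq g(y,x)$; (ABT2) $y\cdot f(x,z)\leq f(x\cdot f(x,y),z)$; (ABT3) $f(x,g(x,-y)\cdot y)\leq y$; (wMIA) if $x\neq0$ and $y\neq0$ then $g(x,y)\leq f(x,y)$. *)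

(* Defs.v *)
(* Boolean algebras are MathComp's complemented distributive
   lattices with top and bottom (ctbDistrLatticeType):
   + = `|`, . = `&`, - = ~`, 0 = \bot, 1 = \top. *)
From HB Require Import structures.
From mathcomp Require Import all_boot all_order.
Set Implicit Arguments. Unset Strict Implicit. Unset Printing Implicit Defensive.
Import Order.Theory.
Local Open Scope order_scope.

Section Defs.
Context {disp : Order.disp_t} {T : ctbDistrLatticeType disp}.

Definition PS_algebra (f g : T -> T -> T) : Prop :=
  (\bot : T) != \top /\
  (forall x y, (x = \bot \/ y = \bot) -> f x y = \bot) /\
  (forall x x' y, f (x `|` x') y = f x y `|` f x' y) /\
  (forall x y y', f x (y `|` y') = f x y `|` f x y') /\
  (forall x y, (x = \bot \/ y = \bot) -> g x y = \top) /\
  (forall x x' y, g (x `|` x') y = g x y `&` g x' y) /\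
  (forall x y y', g x (y `|` y') = g x y `&` g x y').

Definition betweenness_algebra (f g : T -> T -> T) : Prop :=
  PS_algebra f g /\
  (forall x, x <= f x x) /\
  (forall x y, f x y <= f y x) /\
  (forall x y, g x y <= g y x) /\
  (forall x y z, y `&` f x z <= f (x `&` f x y) z) /\
  (forall x y, f x (g x (~` y) `&` y) <= y) /\
  (forall x y, x != \bot -> y != \bot -> g x y <= f x y).

Definition at_least_four_elements : Prop :=
  exists a b c e : T, uniq [:: a; b; c; e].

Definition zero_one (x : T) : bool := (x == \bot) || (x == \top).

Definition is_subalgebra_universe (f g : T -> T -> T) (S : T -> bool) : Prop :=
  S \bot /\ S \top /\
  (forall x y, S x -> S y -> S (x `|` y)) /\
  (forall x y, S x -> S y -> S (x `&` y)) /\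
  (forall x, S x -> S (~` x)) /\
  (forall x y, S x -> S y -> S (f x y)) /\
  (forall x y, S x -> S y -> S (g x y)).

Definition subalgebra_iso_to (f g : T -> T -> T) (S : T -> bool)
    (f1 g1 : bool -> bool -> bool) : Prop :=
  exists h : bool -> T,
    injective h /\
    (forall x, S x <-> exists b, h b = x) /\
    h false = \bot /\ h true = \top /\
    (forall a b, h (a || b) = h a `|` h b) /\
    (forall a b, h (a && b) = h a `&` h b) /\
    (forall a, h (~~ a) = ~` h a) /\
    (forall a b, h (f1 a b) = f (h a) (h b)) /\
    (forall a b, h (g1 a b) = g (h a) (h b)).

End Defs.

Definition f1 (a b : bool) : bool :=
  match a, b with true, true => true | _, _ => false end.
Definition g1 (a b : bool) : bool :=
  match a, b with true, true => false | _, _ => true end.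

(* Main.v *)
Require Import Defs.
From mathcomp Require Import all_boot all_order.
Import Order.Theory.
Local Open Scope order_scope.

Theorem theorem45 (disp : Order.disp_t) (T : ctbDistrLatticeType disp)
    (f g : T -> T -> T) :
  betweenness_algebra f g ->
  at_least_four_elements (T := T) ->
  is_subalgebra_universe f g zero_one /\
  subalgebra_iso_to f g zero_one f1 g1.
Proof.
move=> [[H01 [f0 [fDl [fDr [g0 [gDl gDr]]]]]] [A0 [A1f [A1g [A2 [A3 W]]]]]] [a [b [c [e Hu]]]].
have joinE : forall x x' : T, x <= x' -> x' = x `|` x'.
  by move=> x x' H; apply/eqP; rewrite eq_le leUr leUx lexx andbT H.
have fmL : forall x x' y, x <= x' -> f x y <= f x' y.
  by move=> x x' y H; rewrite (joinE _ _ H) fDl leUl.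
have fmR : forall x y y', y <= y' -> f x y <= f x y'.
  by move=> x y y' H; rewrite (joinE _ _ H) fDr leUl.
have gaL : forall x x' y, x <= x' -> g x' y <= g x y.
  by move=> x x' y H; rewrite (joinE _ _ H) gDl leIl.
have gaR : forall x y y', y <= y' -> g x y' <= g x y.
  by move=> x y y' H; rewrite (joinE _ _ H) gDr leIl.
set z := g \top \top.
have zle : forall x y, z <= g x y.
  move=> x y; apply: le_trans (gaL _ _ _ (lex1 x)).
  exact: gaR _ _ _ (lex1 y).
have fz : forall x, f x z <= z.
  move=> x; have := A3 x z.
  suff -> : g x (~` z) `&` z = z by [].
  by apply/eqP; rewrite eq_le leIr lexI lexx zle.
have f11 : f \top \top = \top by apply/eqP; rewrite eq_le lex1 A0.
have g11 : z = \bot.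
  case: (eqVneq z \top) => [z1|z1].
    (* g identically top: algebra has two elements *)
    have gT : forall x y, g x y = \top.
      by move=> x y; apply/eqP; rewrite eq_le lex1 -z1 zle.
    have all2 : forall y : T, y = \bot \/ y = \top.
      move=> y; case: (eqVneq y \bot) => [->|yn]; first by left.
      right; apply/eqP; rewrite eq_le lex1 /=.
      have := A3 \top y; rewrite gT meet1x => Hy.
      apply: le_trans Hy; rewrite -{1}(gT \top y); apply: W => //; by rewrite eq_sym.
    exfalso.
    move: Hu.
    by case: (all2 a) => ->; case: (all2 b) => ->; case: (all2 c) => ->;
      case: (all2 e) => ->; rewrite /= !inE ?eqxx ?orbT //= ?andbF.
  have nz : ~` z != \bot.
    by apply/eqP=> H; move: z1; rewrite -(complK z) H compl0 eqxx.
  have zf : z <= f (~` z) (~` z) by exact: le_trans (zle _ _) (W _ _ nz nz).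
  have := A2 (~` z) z (~` z).
  have -> : ~` z `&` f (~` z) z = \bot.
    apply/eqP; rewrite eq_le le0x andbT -(meetCx z).
    by rewrite lexI leIl /= (le_trans (leIr _ _) (fz _)).
  rewrite (f0 \bot); last by left.
  move=> H; apply/eqP; rewrite eq_le le0x andbT.
  by apply: le_trans H; rewrite lexI lexx zf.
have gTT : g \top \top = \bot by [].
pose h (b : bool) : T := if b then \top else \bot.
have hf : forall a b, h (f1 a b) = f (h a) (h b).
  by case; case => /=; rewrite ?f11 // f0 //; (left + right).
have hg : forall a b, h (g1 a b) = g (h a) (h b).
  by case; case => /=; rewrite ?gTT // g0 //; (left + right).
have hS : forall x, zero_one x <-> exists b, h b = x.
  move=> x; rewrite /zero_one; split.
    by case/orP => /eqP ->; [exists false | exists true].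
  by case=> [[]] <-; rewrite eqxx ?orbT.
have hS' : forall x, zero_one x -> exists b, h b = x by move=> x /hS.
have Sh : forall w, zero_one (h w) by move=> w; apply/hS; exists w.
have hor : forall a b, h (a || b) = h a `|` h b.
  by case; case => /=; rewrite ?joinxx ?joinx1 ?join1x ?joinx0.
have hand : forall a b, h (a && b) = h a `&` h b.
  by case; case => /=; rewrite ?meetxx ?meetx0 ?meet0x ?meetx1.
have hneg : forall a, h (~~ a) = ~` h a.
  by case => /=; rewrite ?compl1 ?compl0.
split.
  split; first by apply: (Sh false).
  split; first by apply: (Sh true).
  split; first by move=> x y /hS' [u <-] /hS' [v <-]; rewrite -hor.
  split; first by move=> x y /hS' [u <-] /hS' [v <-]; rewrite -hand.
  split; first by move=> x /hS' [u <-]; rewrite -hneg.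
  split; first by move=> x y /hS' [u <-] /hS' [v <-]; rewrite -hf.
  by move=> x y /hS' [u <-] /hS' [v <-]; rewrite -hg.
exists h; split.
  case; case => //= /eqP; rewrite ?(negbTE H01) //.
  by rewrite eq_sym (negbTE H01).
by do !split => //.
Qed.
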